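(* Let $\mathcal S$ be a nonempty set of vertices and $o$ a vertex such that at least one $c\in\mathcal S$ has a directed path to $o$. Let $\delta_{\min}=\min_{c\in\mathcal S}\delta_{co}$. Assume the open loop $M(s)$ is strictly proper with relative degree $\chi=\deg(ap)-\deg(bq)\ge1$. Then the transfer function $$T_{\mathcal S o}(s)=e_o^T\big(I+M(s)L\big)^{-1}M(s)\sum_{c\in\mathcal S}e_c,$$ from a common input fed to all nodes of $\mathcal S$ to $y_o$, has relative degree $(\delta_{\min}+1)\chi$.
   Context: $\mathcal G$ is a weighted directed graph on $\{1,\dots,N\}$ with adjacency matrix $A=[a_{ij}]$. Here $a_{ij}>0$ if there is an arc from $j$ to $i$ and $a_{ij}=0$ otherwise (no self-loops). The Laplacian is $L=D-A$ with $D=\mathrm{diag}(\sum_j a_{ij})$. A directed path from $u$ to $w$ is a sequence of distinct vertices $u=v_0,\dots,v_\ell=w$ with an arc from $v_k$ to $v_{k+1}$ for each $k$, and $\ell$ is its length. $\delta_{uw}$ is the length of a shortest directed path from $u$ to $w$; it is $\infty$ if none exists. $e_i$ is the $i$-th canonical basis vector. $a,b,p,q$ are nonzero real polynomials and $M(s)=\frac{b(s)q(s)}{a(s)p(s)}$. The relative degree of a rational function is the degree of its denominator minus the degree of its numerator. *)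

(* Defs.v *)
From HB Require Import structures.
From mathcomp Require Import all_boot all_order all_algebra.
Set Implicit Arguments. Unset Strict Implicit. Unset Printing Implicit Defensive.
Import Order.TTheory GRing.Theory Num.Theory.
Local Open Scope ring_scope.

Notation ratfun R := {fraction {poly R}}.
Definition polyF (R : realFieldType) (x : {poly R}) : ratfun R := tofrac x.

(* [x] has relative degree r : x = n/d with n, d nonzero polynomials and
   deg d - deg n = r  (size = deg + 1, so the difference of sizes is used).
   This is independent of the chosen representation. *)
Definition has_reldeg (R : realFieldType) (x : ratfun R) (r : int) : Prop :=
  exists n d : {poly R}, [/\ n != 0, d != 0, x = polyF n / polyF d &
                            (size d)%:Z - (size n)%:Z = r].

Definition arc (R : realFieldType) (N : nat) (A : 'M[R]_N) (j i : 'I_N) : bool :=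
  0 < A i j.

(* A directed path from u to w: u = v_0, v_1 = p_1, ..., v_l = p_l = w,
   distinct vertices, arcs v_k -> v_{k+1}; its length is size p. *)
Definition dpath (R : realFieldType) (N : nat) (A : 'M[R]_N) (u w : 'I_N)
    (p : seq 'I_N) : bool :=
  [&& path (arc A) u p, last u p == w & uniq (u :: p)].

Definition has_path_len (R : realFieldType) (N : nat) (A : 'M[R]_N) (u w : 'I_N)
    (l : nat) : Prop :=
  exists p, dpath A u w p /\ size p = l.

Definition is_min_dist (R : realFieldType) (N : nat) (A : 'M[R]_N)
    (S : {set 'I_N}) (o : 'I_N) (d : nat) : Prop :=
  (exists2 c, c \in S & has_path_len A c o d) /\
  (forall c l, c \in S -> has_path_len A c o l -> (d <= l)%N).

Definition laplacian (R : realFieldType) (N : nat) (A : 'M[R]_N) : 'M[R]_N :=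
  diag_mx (\row_i \sum_j A i j) - A.

Definition transfer (R : realFieldType) (N : nat) (A : 'M[R]_N)
    (S : {set 'I_N}) (o : 'I_N) (M : ratfun R) : ratfun R :=
  let L := map_mx (fun x => polyF x%:P) (laplacian A) in
  ((delta_mx 0 o : 'rV[ratfun R]_N) *m invmx (1%:M + M *: L) *m
     (M *: \col_(i < N) (i \in S)%:R)) 0 0.

(* Main.v *)
Require Import Defs.
From HB Require Import structures.
From mathcomp Require Import all_boot all_order all_algebra.
From mathcomp Require Import ring lra zify.
Import Order.TTheory GRing.Theory Num.Theory.
Local Open Scope ring_scope.


Section Graph.
Variables (R : realFieldType) (n : nat) (A : 'M[R]_n.+1).
Hypothesis hA : forall i j, 0 <= A i j.
Hypothesis hloop : forall i, A i i = 0.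

Definition walk (j i : 'I_n.+1) (w : seq 'I_n.+1) := path (Defs.arc A) j w && (last j w == i).

Lemma Lap_off i j : i != j -> laplacian A i j = - A i j.
Proof. by move=> ij; rewrite /laplacian !mxE (negbTE ij) mulr0n sub0r. Qed.

Lemma walk_of_nz (B : 'M[R]_n.+1) (hB : forall m j, m != j -> B m j != 0 -> Defs.arc A j m) k :
  forall i j, (B ^+ k) i j != 0 -> exists w, walk j i w /\ (size w <= k)%N.
Proof.
elim: k => [|k IH] i j.
  rewrite expr0 mxE; case: (boolP (i == j)) => [/eqP ->|_] /=; last by rewrite mulr0n eqxx.
  by exists [::]; rewrite /walk /= eqxx.
rewrite exprSr mxE => nz.
have [m _ nzm] : exists2 m, m \in 'I_n.+1 & ((B ^+ k) i m * B m j) != 0.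
  apply/exists_inP; apply: contraR nz => /exists_inPn H.
  by rewrite big1 // => m _; apply/eqP/negbNE/H.
have nz1 : (B ^+ k) i m != 0 by apply: contraNneq nzm => ->; rewrite mul0r.
have [w [wm sw]] := IH _ _ nz1.
case: (eqVneq m j) => [mj|mj].
  by exists w; split; [rewrite -mj | apply: leqW].
have nz2 : B m j != 0 by apply: contraNneq nzm => ->; rewrite mulr0.
exists (m :: w); split => //; move: wm; rewrite /walk /= => /andP[-> ->].
by rewrite hB.
Qed.

Lemma hL m j : m != j -> laplacian A m j != 0 -> Defs.arc A j m.
Proof. by move=> mj; rewrite Lap_off // oppr_eq0 /Defs.arc lt0r => ->; rewrite hA. Qed.

Lemma hNL m j : m != j -> (- laplacian A) m j != 0 -> Defs.arc A j m.
Proof. by move=> mj; rewrite mxE oppr_eq0; apply: hL. Qed.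

Lemma nonneg k : forall i j,
  (forall w, walk j i w -> (k <= size w)%N) ->
  0 <= ((- laplacian A) ^+ k) i j /\
  ((exists w, walk j i w /\ size w = k) -> 0 < ((- laplacian A) ^+ k) i j).
Proof.
elim: k => [|k IH] i j Hmin.
  rewrite expr0 mxE; split; first by case: (i == j); rewrite ?ler01.
  case=> w [/andP[_ /eqP wl] sw]; case: w wl sw => // wl _.
  by rewrite -wl eqxx ltr01.
have Eoff m : m != j -> (- laplacian A) m j = A m j.
  by move=> mj; rewrite mxE Lap_off // opprK.
have term_ge0 m : 0 <= ((- laplacian A) ^+ k) i m * (- laplacian A) m j.
  case: (eqVneq m j) => [->|mj].
    have -> : ((- laplacian A) ^+ k) i j = 0; last by rewrite mul0r.
    apply/eqP; apply: contraT => nz.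
    have [w [wm sw]] := @walk_of_nz _ hNL _ _ _ nz.
    by have := Hmin _ wm; rewrite ltnNge sw.
  rewrite Eoff //; have := hA m j; rewrite le0r => /orP[/eqP ->|pos]; first by rewrite mulr0.
  apply: mulr_ge0 => //; apply: (IH i m _).1 => w wm.
  have : walk j i (m :: w) by move: wm; rewrite /walk /= /Defs.arc pos.
  by move/Hmin.
rewrite exprSr mxE; split; first by apply: sumr_ge0 => m _.
case=> w [wk sw]; case: w wk sw => [//|m w]; rewrite /walk /= => /andP[/andP[amj wp] wl] [sw].
have mj : m != j by apply: contraTneq amj => ->; rewrite /Defs.arc hloop ltxx.
have pos : 0 < ((- laplacian A) ^+ k) i m * (- laplacian A) m j.
  rewrite Eoff //; apply: mulr_gt0 => //; apply: (IH i m _).2.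
    move=> w' wm; have : walk j i (m :: w') by move: wm; rewrite /walk /= amj.
    by move/Hmin.
  by exists w; split => //; rewrite /walk wp.
rewrite (bigD1 m) //=; apply: ltr_wpDr => //; exact: sumr_ge0.
Qed.
End Graph.


Section Phi.
Variable R : realFieldType.
Definition gC : {rmorphism R -> ratfun R} := (@tofrac _ \o polyC)%FUN.
Lemma gCE c : gC c = tofrac c%:P. Proof. by []. Qed.
Definition phi (x : ratfun R) : {rmorphism {poly R} -> ratfun R} :=
  horner_morph (fun a : R => mulrC x (gC a)).
Lemma phiX x : phi x 'X = x. Proof. exact: horner_morphX. Qed.
Lemma phiC x c : phi x c%:P = tofrac c%:P. Proof. exact: horner_morphC. Qed.


End Phi.
Arguments phi {R} x.
Arguments gC {R}.

Section Homog.
Variable R : realFieldType.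

Lemma size_expX (p : {poly R}) k : p != 0 -> size (p ^+ k) = ((size p).-1 * k).+1.
Proof.
move=> p0; rewrite -size_exp prednK // lt0n size_poly_eq0 expf_neq0 //.
Qed.

Lemma homog (u v f : {poly R}) : u != 0 -> v != 0 -> (size u < size v)%N -> f`_0 != 0 ->
  exists h : {poly R}, [/\ h != 0, size h = ((size v).-1 * (size f).-1).+1 &
    phi (tofrac u / tofrac v) f = tofrac h / tofrac (v ^+ (size f).-1)].
Proof.
move=> u0 v0 uv f0.
have : (0 < size f)%N by rewrite lt0n; apply: contraNneq f0 => /eqP; rewrite size_poly_eq0 => /eqP ->; rewrite coef0.
case sf: (size f) => [//|m] _ /=.
set F := fun k : nat => f`_k *: (u ^+ k * v ^+ (m - k)).
exists (\sum_(k < m.+1) F k).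
have sz : size (\sum_(k < m.+1) F k) = ((size v).-1 * m).+1.
  rewrite big_ord_recl /= {1}/F subn0 expr0 mul1r size_polyDl size_scale // size_expX //.
  apply: (leq_ltn_trans (size_sum _ _ _)); apply/bigmax_leqP => i _.
  rewrite /F /=; apply: (leq_trans (size_scale_leq _ _)).
  apply: (leq_trans (size_polyMleq _ _)); rewrite !size_expX //.
  have ltim := ltn_ord i.
  have su : (0 < size u)%N by rewrite lt0n size_poly_eq0.
  move: uv; set a := size u; set b := size v => uv.
  rewrite /bump /= add1n.
  nia.
split => //; first by rewrite -size_poly_eq0 sz.
rewrite /phi /horner_morph /= (horner_coef_wide _ (n := m.+1)); last by rewrite size_map_poly sf.
rewrite rmorph_sum /= mulr_suml; apply: eq_bigr => k _.
rewrite coef_map /F -mul_polyC !rmorphM !rmorphXn /=.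
have vv : tofrac v != 0 by rewrite tofrac_eq0.
have km : (k <= m)%N by rewrite -ltnS.
have -> : tofrac v ^+ m = tofrac v ^+ k * tofrac v ^+ (m - k) by rewrite -exprD subnKC.
move: vv; generalize (tofrac u) (tofrac v) (tofrac (f`_k)%:P) => U V C vv.
have vk : V ^+ (m - k) != 0 by rewrite expf_neq0.
rewrite expr_div_n invfM [V ^- k / _]mulrC !mulrA -(mulrA _ (V ^+ (m - k))) mulfV // mulr1 -!mulrA. 
 by [].
Qed.
End Homog.


Lemma alg_eq (F : fieldType) (U V HP HQ A B C D : F) : V != 0 -> A != 0 -> B != 0 ->
  C != 0 -> HQ != 0 ->
  U / V * ((D / C) * (HP / A)) / (HQ / B) = U * D * HP * B / (V * C * A * HQ).
Proof. move=> *; field; by apply/and5P. Qed.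

Lemma frac_eq (T : idomainType) (u v hP hQ : T) d mP mQ : v != 0 -> hQ != 0 ->
  tofrac u / tofrac v * ((tofrac u / tofrac v) ^+ d * (tofrac hP / tofrac (v ^+ mP))) /
    (tofrac hQ / tofrac (v ^+ mQ)) =
  tofrac (u ^+ d.+1 * hP * v ^+ mQ) / tofrac (v ^+ d.+1 * v ^+ mP * hQ).
Proof.
move=> v0 q0.
rewrite !tofracM !tofracXn.
have vF : tofrac v != 0 by rewrite tofrac_eq0.
have hQF : tofrac hQ != 0 by rewrite tofrac_eq0.
move: vF hQF; generalize (tofrac u) (tofrac v) (tofrac hP) (tofrac hQ) => U V HP HQ vF hQF.
have e1 : V ^+ mP != 0 by rewrite expf_neq0.
have e2 : V ^+ mQ != 0 by rewrite expf_neq0.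
have e3 : V ^+ d != 0 by rewrite expf_neq0.
rewrite exprS (exprS V) expr_div_n.
move: (V ^+ mP) (V ^+ mQ) (V ^+ d) (U ^+ d) e1 e2 e3 => A B C D e1 e2 e3.
exact: alg_eq.
Qed.

Lemma size_expX' (R : realFieldType) (p : {poly R}) k : p != 0 -> size (p ^+ k) = ((size p).-1 * k).+1.
Proof.
move=> p0; rewrite -size_exp prednK // lt0n size_poly_eq0 expf_neq0 //.
Qed.

Lemma size_eq (R : realFieldType) (u v hP hQ : {poly R}) d mP mQ :
  u != 0 -> v != 0 -> hP != 0 -> hQ != 0 -> (size u < size v)%N ->
  size hP = ((size v).-1 * mP).+1 -> size hQ = ((size v).-1 * mQ).+1 ->
  (size (v ^+ d.+1 * v ^+ mP * hQ))%:Z - (size (u ^+ d.+1 * hP * v ^+ mQ))%:Z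
   = ((d.+1 * (size v - size u))%N)%:Z.
Proof.
move=> u0 v0 p0 q0 uv hPs hQs.
have su : (0 < size u)%N by rewrite lt0n size_poly_eq0.
rewrite !size_mul ?mulf_neq0 ?expf_neq0 // !size_expX' // hPs hQs.
move: uv su; generalize (size u) (size v) => a b uv su.
nia.
Qed.


Section Main.
Variables (R : realFieldType) (n : nat) (A : 'M[R]_n.+1).
Hypothesis hA : forall i j, 0 <= A i j.
Hypothesis hloop : forall i, A i i = 0.
Variables (S : {set 'I_n.+1}) (o : 'I_n.+1) (dmin : nat).
Hypothesis hdmin : is_min_dist A S o dmin.

Definition L := laplacian A.
Definition LX : 'M[{poly R}]_n.+1 := map_mx polyC L.
Definition Bx : 'M[{poly R}]_n.+1 := 1 + 'X *: LX.
Definition eX : 'rV[{poly R}]_n.+1 := delta_mx 0 o.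
Definition colR : 'cV[R]_n.+1 := \col_(i < n.+1) (i \in S)%:R.
Definition colX : 'cV[{poly R}]_n.+1 := map_mx polyC colR.
Definition Qx := \det Bx.
Definition rX := eX *m \adj Bx.
Definition z k := (rX *m LX ^+ k *m colX) 0 0.
Definition cR k := ((delta_mx 0 o : 'rV[R]_n.+1) *m L ^+ k *m colR) 0 0.

Lemma LX_exp k : LX ^+ k = map_mx polyC (L ^+ k).
Proof.
elim: k => [|k IH]; first by rewrite !expr0 map_mx1.
by rewrite !exprS IH -!mulmxE map_mxM.
Qed.

Lemma cX k : (eX *m LX ^+ k *m colX) 0 0 = (cR k)%:P.
Proof.
by rewrite LX_exp /eX /colX -(map_delta_mx (@polyC R)) -!map_mxM mxE.
Qed.

Lemma z_rec k : z k = Qx * (cR k)%:P - 'X * z k.+1.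
Proof.
have hr : rX = Qx *: eX - 'X *: (rX *m LX).
  have : rX *m Bx = Qx *: eX by rewrite /rX -mulmxA mul_adj_mx mul_mx_scalar.
  rewrite /Bx mulmxDr mulmx1 -scalemxAr => <-; by rewrite addrK.
have E : rX *m LX ^+ k *m colX = Qx *: (eX *m LX ^+ k *m colX) - 'X *: (rX *m LX ^+ k.+1 *m colX).
  rewrite {1}hr mulmxBl mulmxBl -!scalemxAl; congr (_ - _ *: _).
  by rewrite exprS -mulmxE !mulmxA.
by rewrite /z E -cX !mxE.
Qed.

Lemma z_expand m : z 0 = \sum_(k < m) Qx * (- 'X) ^+ k * (cR k)%:P + (- 'X) ^+ m * z m.
Proof.
elim: m => [|m IH]; first by rewrite big_ord0 add0r expr0 mul1r.
rewrite big_ord_recr /= IH z_rec exprSr; ring.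
Qed.

Lemma cRE k : cR k = \sum_j (L ^+ k) o j * (j \in S)%:R.
Proof. by rewrite /cR -rowE mxE; apply: eq_bigr => j _; rewrite !mxE. Qed.

Lemma walk_len_ge c w : c \in S -> walk R n A c o w -> (dmin <= size w)%N.
Proof.
move=> cS /andP[wp wl].
have [p' [dp sz]] : exists p', dpath A c o p' /\ (size p' <= size w)%N.
  move: wl; case: (shortenP wp) => p' pp up sub wl; exists p'; split.
    by rewrite /dpath pp wl up.
  by apply: uniq_leq_size => //; case/andP: up.
apply: leq_trans sz; apply: hdmin.2 cS _; by exists p'.
Qed.

Lemma cR_zero k : (k < dmin)%N -> cR k = 0.
Proof.
move=> kd; rewrite cRE big1 // => j _.
case: (boolP (j \in S)) => jS; last by rewrite mulr0.
apply/eqP; apply: contraT => nz.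
have nz' : (L ^+ k) o j != 0 by apply: contraNneq nz => ->; rewrite mul0r.
have [w [wj sw]] := @walk_of_nz _ _ A _ (@hL _ _ A hA) _ _ _ nz'.
by have := @walk_len_ge _ _ jS wj; rewrite leqNgt (leq_ltn_trans sw kd).
Qed.

Lemma Lk_entry k i j : (L ^+ k) i j = (-1) ^+ k * ((- L) ^+ k) i j.
Proof. by rewrite -scaleN1r exprZn mxE signrMK. Qed.

Lemma cR_dmin : cR dmin != 0.
Proof.
rewrite cRE.
under eq_bigr => j _ do rewrite Lk_entry -mulrA.
rewrite -mulr_sumr mulf_neq0 ?signr_eq0 // gt_eqF //.
have [c0 c0S [p0 [/andP[pp /andP[pl _]] sp]]] := hdmin.1.
have ge0 j : 0 <= ((- L) ^+ dmin) o j * (j \in S)%:R.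
  case: (boolP (j \in S)) => jS; last by rewrite mulr0.
  rewrite mulr1; apply: (@nonneg _ _ A hA hloop _ _ _ _).1 => w wj.
  exact: @walk_len_ge _ _ jS wj.
rewrite (bigD1 c0) //=; apply: ltr_wpDr; first exact: sumr_ge0.
rewrite c0S mulr1; apply: (@nonneg _ _ A hA hloop _ _ _ _).2.
  by move=> w wj; apply: (@walk_len_ge _ _ c0S wj).
by exists p0; split => //; rewrite /walk pp pl.
Qed.

Lemma det_h0 (B : 'M[{poly R}]_n.+1) : (\det B).[0] = \det (map_mx (horner_eval 0) B).
Proof. by rewrite (det_map_mx (horner_eval (0:R)) B). Qed.

Lemma Q0 : Qx.[0] = 1.
Proof.
rewrite /Qx det_h0 /Bx map_mxD map_mx1 map_mxZ /=.
have -> : horner_eval (0:R) ('X : {poly R}) = 0 by exact: hornerX.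
rewrite scale0r addr0.
exact: det1.
Qed.

Lemma cRP_zero k : (k < dmin)%N -> (cR k)%:P = 0.
Proof. by move=> kd; rewrite cR_zero // polyC0. Qed.

Lemma Y_fact : exists P, z 0 = 'X^dmin * P /\ P`_0 != 0.
Proof.
exists ((-1) ^+ dmin * (Qx * (cR dmin)%:P - 'X * z dmin.+1)); split.
  rewrite (z_expand dmin.+1) big_ord_recr.
  rewrite big1 => [|k _]; last first. rewrite cRP_zero ?mulr0. reflexivity. exact: (ltn_ord k).
  rewrite Monoid.mul1m.
  have om : nat_of_ord (@ord_max dmin) = dmin by [].
  rewrite om.
  move: Qx (z dmin.+1) (cR dmin)%:P ('X : {poly R}) => Q Z c x.
  rewrite exprSr (exprNn x dmin).
  ring.
have q0 := Q0; move: Qx q0 (z dmin.+1) => Q q0 Z.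
rewrite -horner_coef0 !hornerM hornerD hornerN !hornerM hornerC hornerX q0 horner_exp hornerN hornerC.
rewrite mul0r subr0 mul1r mulf_neq0 ?cR_dmin //.
by rewrite expf_neq0 // oppr_eq0 oner_neq0.
Qed.
Lemma gen_transfer (f : {rmorphism {poly R} -> ratfun R}) (B : 'M[{poly R}]_n.+1)
  (e : 'rV_n.+1) (c : 'cV_n.+1) : f (\det B) != 0 ->
  (map_mx f e *m invmx (map_mx f B) *m map_mx f c) 0 0 = f ((e *m \adj B *m c) 0 0) / f (\det B).
Proof.
move=> nz.
have U : map_mx f B \in unitmx by rewrite unitmxE det_map_mx unitfE.
rewrite /invmx U det_map_mx -map_mx_adj -scalemxAr -scalemxAl -!map_mxM mxE mxE.
by rewrite mulrC.
Qed.

Lemma transfer_eq (x : ratfun R) : phi x Qx != 0 ->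
  transfer A S o x = phi x ('X * z 0) / phi x Qx.
Proof.
move=> nz.
have hB : map_mx (phi x) Bx = 1%:M + x *: map_mx (fun c => polyF c%:P) (laplacian A).
  rewrite /Bx map_mxD map_mx1 map_mxZ phiX; congr (_ + _ *: _).
  by apply/matrixP => i j; rewrite !mxE phiC.
have hc : x *: \col_(i < n.+1) (i \in S)%:R = map_mx (phi x) ('X *: colX).
  rewrite map_mxZ phiX; congr (_ *: _).
  by apply/matrixP => i j; rewrite !mxE phiC !rmorph_nat.
have he : (delta_mx 0 o : 'rV[ratfun R]_n.+1) = map_mx (phi x) eX by rewrite map_delta_mx.
rewrite /transfer -/L -hB hc he gen_transfer //.
congr (phi x _ / _); rewrite /z expr0 mulmx1 /rX -scalemxAr mxE.
by [].
Qed.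

Lemma main_n (a b p q : {poly R}) (ha : a != 0) (hb : b != 0) (hp : p != 0) (hq : q != 0)
  (hproper : (size (b * q)%R < size (a * p)%R)%N) :
  has_reldeg (transfer A S o (polyF (b * q) / polyF (a * p)))
    ((dmin.+1 * (size (a * p)%R - size (b * q)%R))%N)%:Z.
Proof.
move: hproper; rewrite /polyF.
have u0 : b * q != 0 by rewrite mulf_neq0.
have v0 : a * p != 0 by rewrite mulf_neq0.
move: u0 v0; set u := b * q; set v := a * p => u0 v0 uv.
have [P [hY hP0]] := Y_fact.
have hQ0 : Qx`_0 != 0 by rewrite -horner_coef0 Q0 oner_neq0.
have [hP [hPnz hPs hPe]] := @homog R _ _ _ u0 v0 uv hP0.
have [hQ [hQnz hQs hQe]] := @homog R _ _ _ u0 v0 uv hQ0.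
have vF : tofrac v != 0 by rewrite tofrac_eq0.
have nzQ : phi (tofrac u / tofrac v) Qx != 0.
  by rewrite hQe mulf_neq0 ?invr_eq0 ?tofrac_eq0 ?expf_neq0.
rewrite transfer_eq // hY !(rmorphM (phi (tofrac u / tofrac v))) rmorphXn /= phiX hPe hQe.
exists (u ^+ dmin.+1 * hP * v ^+ (size Qx).-1), (v ^+ dmin.+1 * v ^+ (size P).-1 * hQ).
split.
- by rewrite !mulf_neq0 ?expf_neq0.
- by rewrite !mulf_neq0 ?expf_neq0.
- exact: frac_eq.
- exact: size_eq.
Qed.

End Main.

Theorem mainTheorem11 (R : realFieldType) (N : nat) (A : 'M[R]_N)
  (hA : forall i j, 0 <= A i j) (hloop : forall i, A i i = 0)
  (S : {set 'I_N}) (o : 'I_N) (hS : S != set0)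
  (hreach : exists2 c, c \in S & exists l, has_path_len A c o l)
  (dmin : nat) (hdmin : is_min_dist A S o dmin)
  (a b p q : {poly R}) (ha : a != 0) (hb : b != 0) (hp : p != 0) (hq : q != 0)
  (hproper : (size (b * q)%R < size (a * p)%R)%N) :
  let M := polyF (b * q) / polyF (a * p) in
  let chi := (size (a * p)%R - size (b * q)%R)%N in
  has_reldeg (transfer A S o M) ((dmin.+1 * chi)%N)%:Z.
Proof.
move=> M chi.
destruct N as [|n]; first by have := ltn_ord o; rewrite ltn0.
exact: (@main_n R n A hA hloop S o dmin hdmin a b p q ha hb hp hq hproper).
Qed.
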